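(* Let $d\ge1$, let $\Gamma$ be the free group on $d$ generators $a_1,\dots,a_d$, and let $T_{2d}$ be the Cayley graph of $\Gamma$ with respect to $\{a_1,\dots,a_d\}$ (a $2d$-regular tree), with $\Gamma$ acting by left multiplication; set $G=\mathrm{Aut}(T_{2d})$ and view $\Gamma\le G$. Let $K_d\trianglelefteq\Gamma$ be the kernel of the abelianization $\Gamma\to\mathbb Z^d$ (so $T_{2d}/K_d$ is the Cayley graph of $\mathbb Z^d$ with respect to the standard generators). Then $\mathrm{Comm}_G(K_d)\cap\mathrm{Comm}_G(\Gamma)$ is discrete in $G$.
   Context: $G$ carries the compact-open (permutation) topology. $\mathrm{Comm}_G(A)=\{g\in G: gAg^{-1}\cap A$ has finite index in both $A$ and $gAg^{-1}\}$. *)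

(* Defs.v *)
From mathcomp Require Import all_boot.
From mathcomp Require Import ssralg ssrint.
From Stdlib Require List.
Set Implicit Arguments. Unset Strict Implicit. Unset Printing Implicit Defensive.

(* A letter (i, b) stands for a_i if b = false and a_i^{-1} if b = true. *)
Definition letter := (nat * bool)%type.
Definition linv (x : letter) : letter := (x.1, ~~ x.2).

Fixpoint reducedb (w : seq letter) : bool :=
  match w with
  | x :: ((y :: _) as w') => (y != linv x) && reducedb w'
  | _ => true
  end.

Definition wordb (d : nat) (w : seq letter) : bool :=
  all (fun x : letter => x.1 < d) w && reducedb w.

Definition push (x : letter) (w : seq letter) : seq letter :=
  if w is y :: w' then (if y == linv x then w' else x :: w) else [:: x].

Definition mulw (u v : seq letter) : seq letter := foldr push v u.

(* elements of the free group F_d = vertices of the tree T_{2d} *)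
Definition FG (d : nat) := {w : seq letter | wordb d w}.

Definition letters (d : nat) : seq letter :=
  [seq (i, b) | i <- iota 0 d, b <- [:: false; true]].

Definition adj (d : nat) (u v : FG d) : bool :=
  has (fun x => val v == mulw (val u) [:: x]) (letters d).

(* left multiplication by gamma (the product of reduced words with letters
   < d is again such a word; insubd's default is never used) *)
Definition lmul (d : nat) (gamma : FG d) : FG d -> FG d :=
  fun v => insubd v (mulw (val gamma) (val v)).

Definition isAut (d : nat) (f : FG d -> FG d) : Prop :=
  bijective f /\ forall u v, adj u v = adj (f u) (f v).

Definition fset_ (d : nat) := (FG d -> FG d) -> Prop.

Definition Gamma (d : nat) : fset_ d := fun f => exists gamma : FG d, f =1 lmul gamma.

Definition expsum (i : nat) (w : seq letter) : int :=
  (\sum_(x <- w | x.1 == i) (if x.2 then (-1) else 1))%R.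

Definition Kd (d : nat) : fset_ d :=
  fun f => exists gamma : FG d, f =1 lmul gamma /\ forall i, expsum i (val gamma) = 0%R.

Definition conjset (d : nat) (g : FG d -> FG d) (A : fset_ d) : fset_ d :=
  fun h => isAut h /\ exists a, A a /\ h \o g =1 g \o a.

Definition setI_ (d : nat) (A B : fset_ d) : fset_ d := fun f => A f /\ B f.

Definition fin_index (d : nat) (H A : fset_ d) : Prop :=
  exists s : seq (FG d -> FG d), (forall t, List.In t s -> A t) /\
    forall a, A a -> exists t, List.In t s /\ exists h, H h /\ a =1 t \o h.

Definition Comm (d : nat) (A : fset_ d) : fset_ d :=
  fun g => isAut g /\
    fin_index (setI_ (conjset g A) A) A /\
    fin_index (setI_ (conjset g A) A) (conjset g A).

(* S is discrete in G for the permutation topology: every g in S has a basic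
   neighbourhood {h | h = g on a finite set F of vertices} meeting S only in g *)
Definition discrete_ (d : nat) (S : fset_ d) : Prop :=
  forall g, S g -> exists F : seq (FG d),
    forall h, S h -> (forall v, v \in F -> h v = g v) -> h =1 g.

Arguments Gamma d : clear implicits.
Arguments Kd d : clear implicits.

(* Main.v *)
Require Import Defs.
From mathcomp Require Import all_boot.
From mathcomp Require Import order ssralg ssrint ssrnum zify ring lra.
From Stdlib Require Import FunctionalExtensionality IndefiniteDescription.
Set Implicit Arguments. Unset Strict Implicit. Unset Printing Implicit Defensive.
Import Order.TTheory GRing.Theory Num.Theory.

Lemma linvK (x : letter) : linv (linv x) = x.
Proof. by case: x => a b; rewrite /linv /= negbK. Qed.

Lemma push_red x w : reducedb w -> reducedb (push x w).
Proof.
case: w => [|y w] //= H.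
case: eqP => [_|/eqP ne]; last by rewrite /= ne.
by case: w H => [|z w] //= /andP[].
Qed.

Lemma push_all d x w : x.1 < d -> all (fun x : letter => x.1 < d) w ->
  all (fun x : letter => x.1 < d) (push x w).
Proof. case: w => [|y w] /=; first by move=> ->. by move=> Hx /andP[Hy Hw]; case: eqP => _ //=; rewrite Hx Hy. Qed.

Lemma mulw_red u v : reducedb v -> reducedb (mulw u v).
Proof. by elim: u => [|x u IH] //= Hv; apply/push_red/IH. Qed.

Lemma mulw_all d u v : all (fun x : letter => x.1 < d) u -> all (fun x : letter => x.1 < d) v ->
  all (fun x : letter => x.1 < d) (mulw u v).
Proof. elim: u => [|x u IH] //= /andP[Hx Hu] Hv; apply/push_all => //; exact: IH. Qed.

Lemma push_cancel x w : reducedb w -> push x (push (linv x) w) = w.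
Proof.
case: w => [|y w] /=; first by rewrite eqxx.
case: eqP => [->|/eqP ne] Hr.
- rewrite linvK; case: w Hr => [|z w] //= /andP[nz _].
  by rewrite linvK in nz; rewrite (negbTE nz).
- by rewrite /= eqxx.
Qed.

Lemma mulw_push x u v : reducedb v -> mulw (push x u) v = push x (mulw u v).
Proof.
move=> Hv; case: u => [|y u] //=.
case: eqP => [->|_] //=.
by rewrite push_cancel //; apply: mulw_red.
Qed.

Lemma mulwA u v w : reducedb w -> mulw (mulw u v) w = mulw u (mulw v w).
Proof.
move=> Hw; elim: u => [|x u IH] //=.
by rewrite mulw_push // IH.
Qed.

Lemma mulw_cat s t : reducedb (s ++ t) -> mulw s t = s ++ t.
Proof.
elim: s => [|x s IH] //= H.
have Hst : reducedb (s ++ t) by case: (s ++ t) H => [|y w] // /andP[].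
rewrite IH //; case: (s ++ t) H => [|y w] //= /andP[ne _].
by rewrite (negbTE ne).
Qed.

Definition invw (u : seq letter) : seq letter := mulw (rev (map linv u)) [::].

Lemma mulw_rcons s y v : mulw (rcons s y) v = mulw s (push y v).
Proof. by rewrite /mulw foldr_rcons. Qed.

Lemma invw_l u : reducedb u -> mulw (invw u) u = [::].
Proof.
move=> Ru; rewrite /invw mulwA //.
elim: u {Ru} => [|x u IH] //=.
by rewrite rev_cons mulw_rcons /= linvK eqxx.
Qed.

Section FG.
Variable d : nat.
Local Notation G := (FG d).

Lemma word_one : wordb d [::]. Proof. by []. Qed.
Definition one : G := @exist _ (fun w => wordb d w) [::] word_one.

Lemma word_mul (u v : G) : wordb d (mulw (val u) (val v)).
Proof.
case: u v => [u /andP[Au Ru]] [v /andP[Av Rv]] /=.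
by apply/andP; split; [apply: mulw_all | apply: mulw_red].
Qed.
Definition mul (u v : G) : G := @exist _ (fun w => wordb d w) _ (word_mul u v).

Lemma word_inv (u : G) : wordb d (invw (val u)).
Proof.
case: u => [u /andP[Au Ru]] /=; apply/andP; split; last exact: mulw_red.
apply: mulw_all => //; rewrite all_rev all_map.
by apply/allP => x /(allP Au).
Qed.
Definition inv (u : G) : G := @exist _ (fun w => wordb d w) _ (word_inv u).

Lemma mul1g u : mul one u = u. Proof. by apply: val_inj. Qed.
Lemma mulg1 u : mul u one = u.
Proof. apply: val_inj; case: u => [u /andP[_ Ru]] /=; by rewrite mulw_cat ?cats0. Qed.
Lemma mulgA u v w : mul u (mul v w) = mul (mul u v) w.
Proof. apply: val_inj; case: w => [w /andP[_ Rw]] /=; by rewrite mulwA. Qed.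
Lemma mulVg u : mul (inv u) u = one.
Proof. apply: val_inj => /=; apply: invw_l; by case/andP: (valP u). Qed.
Lemma mulgV u : mul u (inv u) = one.
Proof.
rewrite -[mul u (inv u)]mul1g -{1}(mulVg (inv u)) -mulgA (mulgA (inv u)).
by rewrite mulVg mul1g mulVg.
Qed.
Lemma mulKg u v : mul (inv u) (mul u v) = v.
Proof. by rewrite mulgA mulVg mul1g. Qed.
Lemma mulKVg u v : mul u (mul (inv u) v) = v.
Proof. by rewrite mulgA mulgV mul1g. Qed.
Lemma mulgK u v : mul (mul v u) (inv u) = v.
Proof. by rewrite -mulgA mulgV mulg1. Qed.
Lemma mulgKV u v : mul (mul v (inv u)) u = v.
Proof. by rewrite -mulgA mulVg mulg1. Qed.
Lemma mulg_injl u : injective (mul u).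
Proof. by move=> v w E; rewrite -(mulKg u v) E mulKg. Qed.
Lemma mulg_injr u : injective (mul^~ u).
Proof. by move=> v w E; rewrite -(mulgK u v) E mulgK. Qed.
Lemma invMg u v : inv (mul u v) = mul (inv v) (inv u).
Proof.
apply: (@mulg_injl (mul u v)); rewrite mulgV.
by rewrite -mulgA (mulgA v) mulgV mul1g mulgV.
Qed.
Lemma invgK u : inv (inv u) = u.
Proof. by apply: (@mulg_injl (inv u)); rewrite mulgV mulVg. Qed.

Lemma lmulE (g v : G) : lmul g v = mul g v.
Proof. apply: val_inj; rewrite /lmul insubdK //; exact: word_mul. Qed.

End FG.

Open Scope ring_scope.

Definition sgl (x : letter) (i : nat) : int :=
  if x.1 == i then (if x.2 then -1 else 1) else 0.

Lemma expsum_cons i x w : expsum i (x :: w) = sgl x i + expsum i w.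
Proof. by rewrite /expsum big_cons /sgl; case: ifP => _ //; rewrite add0r. Qed.

Lemma sgl_linv x i : sgl (linv x) i = - sgl x i.
Proof. by case: x => a [] /=; rewrite /sgl /=; case: ifP. Qed.

Lemma expsum_push i x w : expsum i (push x w) = sgl x i + expsum i w.
Proof.
case: w => [|y w] /=; first by rewrite expsum_cons.
case: eqP => [->|_]; last by rewrite expsum_cons.
by rewrite expsum_cons sgl_linv addrA subrr add0r.
Qed.

Lemma expsum_mulw i u v : expsum i (mulw u v) = expsum i u + expsum i v.
Proof.
elim: u => [|x u IH] /=; first by rewrite /expsum big_nil add0r.
by rewrite expsum_push IH expsum_cons addrA.
Qed.

Section FG2.
Variable d : nat.
Local Notation G := (FG d).

Definition ab (u : G) (i : nat) : int := expsum i (val u).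

Lemma ab_mul u v i : ab (mul u v) i = ab u i + ab v i.
Proof. exact: expsum_mulw. Qed.
Lemma ab_one i : ab (one d) i = 0.
Proof. by rewrite /ab /expsum big_nil. Qed.
Lemma ab_inv u i : ab (inv u) i = - ab u i.
Proof.
apply/eqP; rewrite -subr_eq0 opprK -ab_mul mulVg; exact/eqP/ab_one.
Qed.

Fixpoint pw (u : G) (n : nat) : G := if n is n'.+1 then mul (pw u n') u else one d.

Lemma pwD u m n : pw u (m + n) = mul (pw u m) (pw u n).
Proof.
elim: n => [|n IH]; first by rewrite addn0 /= mulg1.
by rewrite addnS /= IH mulgA.
Qed.

Lemma pwM u m n : pw u (m * n) = pw (pw u m) n.
Proof. elim: n => [|n IH]; first by rewrite muln0. by rewrite mulnS addnC pwD IH. Qed.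

Lemma ab_pw u n i : ab (pw u n) i = n%:Z * ab u i.
Proof.
elim: n => [|n IH] /=; first by rewrite ab_one mul0r.
by rewrite ab_mul IH -addn1 PoszD mulrDl mul1r.
Qed.

Definition conj (w e : G) : G := mul (mul w e) (inv w).

Lemma conj_mul w e1 e2 : mul (conj w e1) (conj w e2) = conj w (mul e1 e2).
Proof. by rewrite /conj -!mulgA mulKg !mulgA. Qed.

Lemma conj_pw w e n : pw (conj w e) n = conj w (pw e n).
Proof.
elim: n => [|n IH] /=; first by rewrite /conj mulg1 mulgV.
by rewrite IH conj_mul.
Qed.

Lemma conjM w e : mul (conj w e) w = mul w e.
Proof. by rewrite /conj mulgKV. Qed.

Lemma ab_conj w e i : ab (conj w e) i = ab e i.
Proof. by rewrite /conj !ab_mul ab_inv addrC addrA addNr add0r. Qed.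

Definition lt (x : letter) : G := insubd (one d) [:: x].

Lemma val_lt x : (x.1 < d)%N -> val (lt x) = [:: x].
Proof. move=> H; rewrite /lt insubdK //; by rewrite unfold_in /wordb /= H. Qed.

Lemma mem_letters x : (x \in letters d) = (x.1 < d)%N.
Proof.
case: x => a b; apply/allpairsP/idP => /=.
- by case=> [[i c]] /= [Hi _ [-> _]]; move: Hi; rewrite mem_iota.
- move=> Ha; exists (a, b); split => //; first by rewrite mem_iota.
  by case: b.
Qed.

Lemma adjP (u v : G) : adj u v <-> exists x : letter, (x.1 < d)%N /\ v = mul u (lt x).
Proof.
split.
- case/hasP => x; rewrite mem_letters => Hx /eqP E; exists x; split => //.
  by apply: val_inj; rewrite /= val_lt.
- case=> x [Hx ->]; apply/hasP; exists x; first by rewrite mem_letters.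
  by rewrite /= val_lt.
Qed.

Lemma ab_lt x i : (x.1 < d)%N -> ab (lt x) i = sgl x i.
Proof. by move=> H; rewrite /ab val_lt // expsum_cons /expsum big_nil addr0. Qed.

Lemma ab_ge (u : G) i : (d <= i)%N -> ab u i = 0.
Proof.
case: u => w Hw Hi; case/andP: (Hw) => Aw _; rewrite /ab /=.
elim: w {Hw} Aw => [|x w IH] /=; first by rewrite /expsum big_nil.
case/andP => Hx Aw; rewrite expsum_cons IH // addr0 /sgl.
case: eqP => // E; move: Hx; rewrite E => Hx.
by move: (leq_trans Hx Hi); rewrite ltnn.
Qed.

Lemma sum_sgl x n : \sum_(i < n) `|sgl x i| = ((x.1 < n)%N)%:R.
Proof.
elim: n => [|n IH]; first by rewrite big_ord0.
rewrite big_ord_recr /= IH /sgl.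
case: (ltngtP x.1 n) => H; rewrite ?ltnS.
- by rewrite (ltnW H) normr0 addr0.
- by rewrite leqNgt H normr0 addr0.
- by rewrite H leqnn add0r; case: x.2.
Qed.

Lemma L1_path (F : nat -> G) :
  (forall s, exists z : letter, (z.1 < d)%N /\ F s.+1 = mul (F s) (lt z)) ->
  forall n, \sum_(i < d) `|ab (F n) i - ab (F 0%N) i| <= n%:Z.
Proof.
move=> HF; elim => [|n IH]; first by rewrite big1 // => i _; rewrite subrr normr0.
case: (HF n) => z [Hz E].
apply: (le_trans (y := \sum_(i < d) (`|ab (F n) i - ab (F 0%N) i| + `|sgl z i|))).
  apply: ler_sum => i _; rewrite E ab_mul ab_lt // addrAC.
  exact: ler_normD.
rewrite big_split /= sum_sgl Hz -addn1 PoszD.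
by rewrite lerD2r.
Qed.

End FG2.


Lemma pigeon_ex (X : eqType) (T : seq X) (R : nat -> X -> Prop) :
  (forall j, exists t, t \in T /\ R j t) ->
  exists i j t, [/\ (i < j)%N, (j <= size T)%N, R i t & R j t].
Proof.
move=> H.
pose F j := proj1_sig (constructive_indefinite_description _ (H j)).
have FP j : F j \in T /\ R j (F j) by rewrite /F; case: constructive_indefinite_description.
pose s := map F (iota 0 (size T).+1).
have : ~~ uniq s.
  apply/negP => U; have := uniq_leq_size U.
  have -> : size s = (size T).+1 by rewrite size_map size_iota.
  move=> /(_ _) H'; suff : ((size T).+1 <= size T)%N by rewrite ltnn.
  apply: H' => y /mapP [j _ ->]; exact: (FP j).1.
case/(uniqPn (F 0%N)) => i [j [ij js E]].
move: js; rewrite size_map size_iota ltnS => js.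
have iS : (i < (size T).+1)%N by apply: (leq_ltn_trans (ltnW ij)); rewrite ltnS.
rewrite !(nth_map 0%N) ?size_iota // ?ltnS // !nth_iota // ?ltnS // !add0n in E.
exists i, j, (F i); split => //; first exact: (FP i).2.
by rewrite E; exact: (FP j).2.
Qed.

Section Side.
Variable d : nat.
Local Notation G := (FG d).
Variables (g g' : G -> G).
Hypothesis gK : cancel g g'.
Hypothesis g'K : cancel g' g.

Definition Rel (h : G -> G) (z e : G) := forall v, h (mul z v) = mul e (h v).
Definition Gd (h : G -> G) (w e : G) := exists e', Rel h (conj w e) e'.
Definition FIg (h : G -> G) := exists T : seq G, forall c, exists t, t \in T /\
  exists z e, Rel h z e /\ c = mul t z.
Definition FIKg (h : G -> G) := exists T : seq G, forall c, (forall i, ab c i = 0) ->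
  exists t, t \in T /\ exists z e, [/\ Rel h z e, (forall i, ab e i = 0) & c = mul t z].
Definition KCg (h : G -> G) := forall z e, Rel h z e -> (forall i, ab z i = 0) ->
  forall i, ab e i = 0.

Lemma Rel_one : Rel g (one d) (one d).
Proof. by move=> v; rewrite !mul1g. Qed.

Lemma Rel_mul z1 e1 z2 e2 : Rel g z1 e1 -> Rel g z2 e2 -> Rel g (mul z1 z2) (mul e1 e2).
Proof. by move=> H1 H2 v; rewrite -mulgA H1 H2 mulgA. Qed.

Lemma Rel_inv z e : Rel g z e -> Rel g (inv z) (inv e).
Proof.
move=> H v; apply: (@mulg_injl _ e); rewrite mulKVg -H.
by rewrite mulKVg.
Qed.

Lemma Rel_pw z e n : Rel g z e -> Rel g (pw z n) (pw e n).
Proof. move=> H; elim: n => [|n IH] /=; [exact: Rel_one | exact: Rel_mul]. Qed.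

Lemma Rel_fun z e1 e2 : Rel g z e1 -> Rel g z e2 -> e1 = e2.
Proof.
by move=> H1 H2; have := H1 (g' (one d)); rewrite H2 g'K !mulg1 => ->.
Qed.

Lemma Rel_swap z e : Rel g z e -> Rel g' e z.
Proof.
by move=> H w; apply: (can_inj gK); rewrite g'K H g'K.
Qed.

Lemma conj_inv (w e : G) : conj w (inv e) = inv (conj w e).
Proof. by rewrite /conj !invMg invgK mulgA. Qed.

Lemma conj_comp (w e1 e2 : G) : conj w (mul e1 e2) = mul (conj (mul w e1) e2) (conj w e1).
Proof. by rewrite /conj !invMg -!mulgA mulKg mulKg. Qed.

Lemma Gd_pw w e n : Gd g w e -> Gd g w (pw e n).
Proof. by case=> e' H; exists (pw e' n); rewrite -conj_pw; apply: Rel_pw. Qed.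

Lemma Gd_mult w e p N : Gd g w (pw e p) -> (p %| N)%N -> Gd g w (pw e N).
Proof. by move=> H /dvdnP [q ->]; rewrite mulnC pwM; apply: Gd_pw. Qed.

Lemma Gd_comp w e1 e2 : Gd g w e1 -> Gd g (mul w e1) e2 -> Gd g w (mul e1 e2).
Proof.
case=> a Ha [b Hb]; exists (mul b a); rewrite conj_comp; exact: Rel_mul.
Qed.

Lemma Gd_val w e e' : Rel g (conj w e) e' -> g (mul w e) = mul e' (g w).
Proof. by move=> H; rewrite -H conjM. Qed.

Hypothesis KC : KCg g.

Lemma Gd_dep w e w' e' : Gd g w e -> Gd g w' e' -> (forall i, ab e i = ab e' i) ->
  forall i, ab (g (mul w e)) i - ab (g w) i = ab (g (mul w' e')) i - ab (g w') i.
Proof.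
case=> a Ha [b Hb] E i.
rewrite (Gd_val Ha) (Gd_val Hb) !ab_mul !addrK.
have H := Rel_mul (Rel_inv Ha) Hb.
have Z : forall i, ab (mul (inv (conj w e)) (conj w' e')) i = 0.
  by move=> k; rewrite ab_mul ab_inv !ab_conj E addNr.
have := KC H Z i; rewrite ab_mul ab_inv => /eqP; rewrite addrC subr_eq0 => /eqP.
by [].
Qed.

End Side.


Section Side2.
Variable d : nat.
Local Notation G := (FG d).
Variables (g g' : G -> G).
Hypothesis gK : cancel g g'.
Hypothesis g'K : cancel g' g.

Lemma diff_coset (t a b za zb : G) : a = mul t za -> b = mul t zb ->
  mul (inv za) zb = mul (inv a) b.
Proof. by move=> -> ->; rewrite invMg -mulgA mulKg. Qed.

Lemma pw_sub (e : G) i j : (i <= j)%N -> mul (inv (pw e i)) (pw e j) = pw e (j - i).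
Proof. by move=> H; rewrite -{1}(subnKC H) pwD mulKg. Qed.

Lemma line : FIg g -> exists n, forall w e, exists p, (0 < p <= n)%N /\ Gd g w (pw e p).
Proof.
case=> T HT; exists (size T) => w e.
have [i [j [t [ij jT [zi [ei [Hi Ei]]] [zj [ej [Hj Ej]]]]]]] :=
  @pigeon_ex _ T (fun j t => exists z e', Rel g z e' /\ conj w (pw e j) = mul t z)
   (fun j => HT (conj w (pw e j))).
exists (j - i)%N; split; first by rewrite subn_gt0 ij /= (leq_trans (leq_subr _ _) jT).
exists (mul (inv ei) ej).
have -> : conj w (pw e (j - i)) = mul (inv zi) zj.
  rewrite (diff_coset Ei Ej) -conj_inv conj_mul pw_sub //; exact: ltnW.
apply: Rel_mul => //; exact: Rel_inv.
Qed.

Lemma KC_of_FIK : FIKg g -> KCg g.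
Proof.
case=> T HT z e Hze Z0 k.
have Zp j : forall i, ab (pw z j) i = 0 by move=> i; rewrite ab_pw Z0 mulr0.
have [i [j [t [ij jT [zi [ei [Hi Ai Ei]]] [zj [ej [Hj Aj Ej]]]]]]] :=
  @pigeon_ex _ T (fun j t => exists z' e', [/\ Rel g z' e', (forall i, ab e' i = 0) &
     pw z j = mul t z']) (fun j => HT (pw z j) (Zp j)).
have E : pw z (j - i) = mul (inv zi) zj.
  by rewrite (diff_coset Ei Ej) pw_sub // ltnW.
have R1 := Rel_pw (j - i) Hze.
have R2 : Rel g (pw z (j - i)) (mul (inv ei) ej).
  by rewrite E; apply: Rel_mul => //; apply: Rel_inv.
have := Rel_fun g'K R1 R2 => /(congr1 (fun u => ab u k)).
rewrite ab_pw ab_mul ab_inv Ai Aj oppr0 addr0 => /eqP.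
rewrite mulf_eq0 => /orP [|/eqP //].
move=> /eqP H; exfalso; move: H; rewrite -[0]/(Posz 0%N) => -[] /eqP.
by rewrite subn_eq0 leqNgt ij.
Qed.

End Side2.


Section Pair.
Variable d : nat.
Local Notation G := (FG d).
Variables (g g' : G -> G).
Hypothesis gK : cancel g g'.
Hypothesis g'K : cancel g' g.
Hypothesis gadj : forall u v, adj u v -> adj (g u) (g v).
Hypothesis g'adj : forall u v, adj u v -> adj (g' u) (g' v).
Hypothesis KC1 : KCg g.
Hypothesis KC2 : KCg g'.
Variable P : nat.
Hypothesis P_gt0 : (0 < P)%N.
Hypothesis HP1 : forall w e, Gd g w (pw e P).
Hypothesis HP2 : forall w e, Gd g' w (pw e P).

Definition isL (y : G) := exists z : letter, (z.1 < d)%N /\ y = lt d z.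

Lemma adj_step (h : G -> G) : (forall u v, adj u v -> adj (h u) (h v)) ->
  forall w z, (z.1 < d)%N -> isL (mul (inv (h w)) (h (mul w (lt d z)))).
Proof.
move=> hadj w z Hz.
have : adj w (mul w (lt d z)) by apply/adjP; exists z.
move/hadj/adjP => [z' [Hz' ->]]; exists z'; split => //; by rewrite mulKg.
Qed.

Definition bb (y : G) (i : nat) : int := ab (g' (pw y P)) i - ab (g' (one d)) i.

Lemma bb_step w y i : ab (g' (mul w (pw y P))) i - ab (g' w) i = bb y i.
Proof.
rewrite /bb -{2}(mul1g (pw y P)).
apply: (Gd_dep KC2); [exact: HP2 | exact: HP2 | by []].
Qed.

Lemma bb_L1 y : isL y -> \sum_(i < d) `|bb y i| <= P%:Z.
Proof.
case=> z [Hz ->].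
have := @L1_path d (fun s => g' (pw (lt d z) s)) _ P; apply.
move=> s /=; have := adj_step g'adj (pw (lt d z) s) Hz.
case=> z' [Hz' E]; exists z'; split => //.
by rewrite -E mulKVg.
Qed.

Definition Wl (s : seq G) : G := foldr (fun y acc => mul (pw y P) acc) (one d) s.

Lemma Wl_Gd s w : Gd g' w (Wl s).
Proof.
elim: s w => [|y s IH] w /=.
  by exists (one d); rewrite /conj mulg1 mulgV; apply: Rel_one.
apply: Gd_comp; [exact: HP2 | exact: IH].
Qed.

Lemma Wl_ab s w i : ab (g' (mul w (Wl s))) i - ab (g' w) i = \sum_(y <- s) bb y i.
Proof.
elim: s w => [|y s IH] w /=; first by rewrite mulg1 big_nil subrr.
rewrite big_cons mulgA -(IH (mul w (pw y P))) -(bb_step w y i).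
ring.
Qed.

Lemma Wl_ab2 s i : ab (Wl s) i = P%:Z * \sum_(y <- s) ab y i.
Proof.
elim: s => [|y s IH] /=; first by rewrite big_nil ab_one mulr0.
by rewrite big_cons ab_mul IH ab_pw mulrDr.
Qed.


Lemma sg_bound (b : nat -> int) k s : (k < d)%N -> \sum_(i < d) `|b i| <= P%:Z ->
   s * s = 1 -> s * b k <= P%:Z.
Proof.
move=> Hk HL ss.
have Hs : `|s| = 1.
  have : `|s| * `|s| = 1 by rewrite -normrM ss normr1.
  have : 0 <= `|s| by [].
  case: (`|s|) => [n|n] //= _; case: n => [|[|n]] //.
apply: (le_trans (ler_norm _)); rewrite normrM Hs mul1r.
apply: le_trans HL.
rewrite (bigD1 (Ordinal Hk)) //= lerDl; exact: sumr_ge0.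
Qed.

Lemma L1_zero (b : nat -> int) k : (k < d)%N -> \sum_(i < d) `|b i| <= P%:Z ->
   `|b k| = P%:Z -> forall i, (i < d)%N -> i != k -> b i = 0.
Proof.
move=> Hk HL Hb i Hi ik.
move: HL; rewrite (bigD1 (Ordinal Hk)) //= Hb -{2}(addr0 P%:Z) lerD2l => HL.
have : \sum_(j < d | j != Ordinal Hk) `|b j| = 0.
  by apply/eqP; rewrite eq_le HL sumr_ge0.
move/eqP; rewrite psumr_eq0 // => /allP /(_ (Ordinal Hi)).
rewrite mem_index_enum /= => /(_ isT).
have -> : (Ordinal Hi != Ordinal Hk) = true by apply/negP => /eqP [] /eqP; apply/negP.
by rewrite normr_eq0 => /eqP.
Qed.

Lemma PL v x u : (x.1 < d)%N -> g (mul v (lt d x)) = mul (g v) (lt d u) ->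
  forall i, bb (lt d u) i = P%:Z * ab (lt d x) i.
Proof.
move=> Hx Hgv.
set X := lt d x.
pose V t := mul v (pw X t).
pose U t := mul (inv (g (V t))) (g (V t.+1)).
have VS t : V t.+1 = mul (V t) X by rewrite /V /= mulgA.
have V0 : V 0%N = v by rewrite /V mulg1.
have UL t : isL (U t) by rewrite /U VS; apply: adj_step.
have gVS t : g (V t.+1) = mul (g (V t)) (U t) by rewrite /U mulKVg.
have U0 : U 0%N = lt d u by rewrite /U VS V0 Hgv mulKg.
have tele n i : ab (g (V n)) i - ab (g v) i = \sum_(t <- iota 0 n) ab (U t) i.
  elim: n => [|n IH]; first by rewrite V0 subrr big_nil.
  rewrite -addn1 iotaD big_cat big_seq1 /= -IH addn1 gVS ab_mul; ring.
have mult k i : ab (g (V (k * P)%N)) i - ab (g v) i = k%:Z * (ab (g (V P)) i - ab (g v) i).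
  elim: k => [|k IH]; first by rewrite ?mul0n V0 subrr mul0r.
  have E : V (k.+1 * P)%N = mul (V (k * P)%N) (pw X P).
    by rewrite /V -mulgA -pwD mulSnr.
  have := Gd_dep KC1 (HP1 (V (k * P)%N) X) (HP1 v X) (fun _ => erefl) i.
  rewrite -E -/(V P) => H.
  rewrite intS mulrDl mul1r -IH -H; ring.
pose s := map U (iota 0 P).
pose E1 := mul (inv (g v)) (g (V (P * P)%N)).
have GE1 : Gd g' (g v) E1.
  have [eta Heta] := HP1 v (pw X P).
  rewrite -pwM -/(V (P * P)%N) in Heta.
  have Hv := Gd_val Heta.
  exists (conj v (pw X (P * P)%N)).
  have -> : conj (g v) E1 = eta by rewrite /E1 /conj mulKVg Hv mulgK.
  exact: Rel_swap.
have abE i : ab E1 i = ab (Wl s) i.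
  rewrite Wl_ab2 big_map ab_mul ab_inv addrC mult -tele.
  by [].
have sumB i : \sum_(t <- iota 0 P) bb (U t) i = (P * P)%N%:Z * ab X i.
  have := Gd_dep KC2 GE1 (Wl_Gd s (g v)) abE i.
  rewrite Wl_ab big_map => <-.
  rewrite /E1 mulKVg !gK /V ab_mul ab_pw; ring.
move=> i.
rewrite -U0.
have Hk := Hx.
pose k := x.1.
pose sg : int := if x.2 then -1 else 1.
have ss : sg * sg = 1 by rewrite /sg; case: (x.2).
have abX j : ab X j = if k == j then sg else 0 by rewrite /X ab_lt.
have bnd t : sg * bb (U t) k <= P%:Z.
  by apply: (sg_bound Hk) => //; apply: bb_L1.
have Z : \sum_(t <- iota 0 P) (P%:Z - sg * bb (U t) k) = 0.
  rewrite sumrB -mulr_sumr sumB abX eqxx big_const_seq count_predT size_iota.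
  by rewrite iter_addr addr0 -mulr_natr natz mulrCA ss mulr1 PoszM subrr.
move/eqP: Z; rewrite psumr_eq0; last by move=> t _; rewrite subr_ge0.
move/allP/(_ 0%N); rewrite mem_iota add0n P_gt0 /= => /(_ isT) /eqP.
move/eqP; rewrite subr_eq0 => /eqP Hb0.
have Hnorm : `|bb (U 0%N) k| = P%:Z.
  have : `|sg| = 1 by rewrite /sg; case: (x.2).
  by move=> Hsg; rewrite -[bb _ _]mul1r -ss -mulrA normrM Hsg mul1r -Hb0.
case: (ltnP i d) => Hid.
- case: (eqVneq k i) => [<-|ki].
  + by rewrite abX eqxx -[LHS]mul1r -ss -mulrA -Hb0 mulrC.
  + rewrite abX (negbTE ki) mulr0.
    apply: (L1_zero Hk _ Hnorm Hid); last by rewrite eq_sym.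
    exact: bb_L1.
- by rewrite /bb !ab_ge // subrr mulr0.
Qed.

End Pair.


Section Comm.
Variable d : nat.
Local Notation G := (FG d).

Lemma isAut_comp (f h : G -> G) : isAut f -> isAut h -> isAut (f \o h).
Proof.
case=> bf af [bh ah]; split; first exact: bij_comp.
by move=> u v; rewrite ah af.
Qed.

Lemma isAut_lmul (c : G) : isAut (lmul c).
Proof.
split.
  exists (lmul (inv c)) => v; by rewrite !lmulE ?mulKg ?mulKVg.
move=> u v; rewrite !lmulE; apply/idP/idP => /adjP [x [Hx E]]; apply/adjP; exists x; split => //.
  by rewrite E mulgA.
by apply: (@mulg_injl _ c); rewrite E mulgA.
Qed.

Lemma isAut_inv (f f' : G -> G) : isAut f -> cancel f f' -> cancel f' f -> isAut f'.
Proof.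
case=> bf af fK f'K; split; first by exists f.
by move=> u v; rewrite -{1}(f'K u) -{1}(f'K v) -af.
Qed.

Lemma In_map (T : Type) (f : T -> G) (s : seq T) t : List.In t s -> f t \in map f s.
Proof.
elim: s => [|a s IH] //= [->|H]; rewrite in_cons; first by rewrite eqxx.
by rewrite IH ?orbT.
Qed.

Variables (A : fset_ d) (Q : G -> Prop).
Hypothesis HA : forall f, A f <-> exists c, f =1 lmul c /\ Q c.
Variables (g g' : G -> G).
Hypothesis Ag : isAut g.
Hypothesis gK : cancel g g'.
Hypothesis g'K : cancel g' g.

Lemma H_elim h : setI_ (conjset g A) A h ->
  exists z e, [/\ h =1 lmul e, Rel g z e, Q z & Q e].
Proof.
case=> [[_ [a [Aa Ea]]] Ah].
case/HA: Aa => z [Ez Qz]; case/HA: Ah => e [Ee Qe].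
exists z, e; split => // v.
by have := Ea v; rewrite /= Ez Ee !lmulE.
Qed.

Lemma C1 : fin_index (setI_ (conjset g A) A) A ->
  exists T : seq G, forall c, Q c -> exists t, t \in T /\
    exists z e, [/\ Rel g z e, Q z, Q e & c = mul t e].
Proof.
case=> s [sA Hs]; exists (map (fun t => t (one d)) s) => c Qc.
have Ac : A (lmul c) by apply/HA; exists c.
case: (Hs _ Ac) => t [ts [h [Hh Et]]].
case: (H_elim Hh) => z [e [Eh Rze Qz Qe]].
case/HA: (sA _ ts) => tau [Etau _].
exists (t (one d)); split; first exact: (In_map (fun t => t (one d)) ts).
exists z, e; split => //.
rewrite (Etau (one d)) lmulE mulg1.
by have := Et (one d); rewrite /= Eh Etau !lmulE !mulg1.
Qed.

Lemma C2 : fin_index (setI_ (conjset g A) A) (conjset g A) ->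
  exists T : seq G, forall c, Q c -> exists t, t \in T /\
    exists z e, [/\ Rel g z e, Q z, Q e & c = mul t z].
Proof.
case=> s [sA Hs]; exists (map (fun t => g' (t (g (one d)))) s) => c Qc.
have Ac : conjset g A (g \o lmul c \o g').
  split.
    apply: isAut_comp; first (apply: isAut_comp => //; exact: isAut_lmul).
    exact: isAut_inv Ag gK g'K.
  exists (lmul c); split; first by apply/HA; exists c.
  by move=> v /=; rewrite gK.
case: (Hs _ Ac) => t [ts [h [Hh Et]]].
case: (H_elim Hh) => z [e [Eh Rze Qz Qe]].
case: (sA _ ts) => _ [a [Aa Ea]].
case/HA: Aa => tau [Etau _].
exists (g' (t (g (one d)))); split; first exact: (In_map (fun t => g' (t (g (one d)))) ts).
exists z, e; split => //.
have E1 : g' (t (g (one d))) = tau.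
  by have := Ea (one d) => /= ->; rewrite Etau lmulE mulg1 gK.
rewrite E1.
have H1 := Et (g (one d)); simpl in H1.
rewrite gK Eh !lmulE -Rze in H1.
have H2 := Ea (mul z (one d)); simpl in H2.
rewrite H2 Etau lmulE in H1.
by have := can_inj gK H1; rewrite !mulg1.
Qed.

End Comm.


Section Main.
Variable d : nat.
Local Notation G := (FG d).

Lemma HAG : forall f, Gamma d f <-> exists c, f =1 lmul c /\ True.
Proof. by move=> f; split; [case=> c H; exists c | case=> c [H _]; exists c]. Qed.

Lemma HAK : forall f, Kd d f <-> exists c, f =1 lmul c /\ (forall i, ab c i = 0).
Proof. by move=> f; split; case=> c H; exists c; exact: H. Qed.

Lemma lt_inj x y : (x.1 < d)%N -> (y.1 < d)%N -> (forall i, ab (lt d x) i = ab (lt d y) i) -> x = y.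
Proof.
move=> Hx Hy H; have := H x.1; rewrite !ab_lt // /sgl eqxx.
case: eqP => [E|]; last by case: (x.2).
case: x y Hx Hy H E => a b [a' b'] /= _ _ _ <-.
by case: b; case: b'.
Qed.

Lemma ML (g : G -> G) : setI_ (Comm (Kd d)) (Comm (Gamma d)) g ->
  forall v x, (x.1 < d)%N ->
  g (mul v (lt d x)) = mul (g v) (mul (inv (g (one d))) (g (lt d x))).
Proof.
case=> [[AgK [FK1 FK2]] [Ag [FG1 FG2]]].
case: (Ag) => [[g' gK g'K] gadjE].
have gadj : forall u v, adj u v -> adj (g u) (g v) by move=> u v; rewrite gadjE.
have [_ g'adjE] := isAut_inv Ag gK g'K.
have g'adj : forall u v, adj u v -> adj (g' u) (g' v) by move=> u v; rewrite g'adjE.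
have FI1 : FIg g.
  case: (C2 HAG Ag gK g'K FG2) => T HT; exists T => c.
  case: (HT c I) => t [tT [z [e [R _ _ E]]]]; exists t; split => //; by exists z, e.
have FI2 : FIg g'.
  case: (C1 HAG FG1) => T HT; exists T => c.
  case: (HT c I) => t [tT [z [e [R _ _ E]]]]; exists t; split => //.
  exists e, z; split => //; exact: Rel_swap.
have FK1' : FIKg g.
  case: (C2 HAK Ag gK g'K FK2) => T HT; exists T => c Qc.
  case: (HT c Qc) => t [tT [z [e [R _ Qe E]]]]; exists t; split => //; by exists z, e.
have FK2' : FIKg g'.
  case: (C1 HAK FK1) => T HT; exists T => c Qc.
  case: (HT c Qc) => t [tT [z [e [R Qz _ E]]]]; exists t; split => //.
  exists e, z; split => //; exact: Rel_swap.
have KC1 := KC_of_FIK g'K FK1'.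
have KC2 := KC_of_FIK gK FK2'.
have [n1 Hn1] := line FI1.
have [n2 Hn2] := line FI2.
pose P := (n1`! * n2`!)%N.
have P_gt0 : (0 < P)%N by rewrite muln_gt0 !fact_gt0.
have HP1 : forall w e, Gd g w (pw e P).
  move=> w e; have [p [/andP [p0 pn] Hp]] := Hn1 w e.
  apply: (Gd_mult Hp); rewrite /P; by rewrite dvdn_mulr // dvdn_fact // p0 pn.
have HP2 : forall w e, Gd g' w (pw e P).
  move=> w e; have [p [/andP [p0 pn] Hp]] := Hn2 w e.
  apply: (Gd_mult Hp); rewrite /P; by rewrite dvdn_mull // dvdn_fact // p0 pn.
have KEY : forall v x u, (x.1 < d)%N -> (u.1 < d)%N ->
    g (mul v (lt d x)) = mul (g v) (lt d u) ->
    forall i, bb g P (lt d x) i = P%:Z * ab (lt d u) i.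
  move=> v x u Hx Hu E.
  apply: (PL g'K gK g'adj gadj KC2 KC1 P_gt0 HP2 HP1 (v := g v) Hu).
  by rewrite -E !gK.
move=> v x Hx.
have [u [Hu Eu]] := adj_step gadj v Hx.
have [u1 [Hu1 Eu1]] := adj_step gadj (one d) Hx.
rewrite mul1g in Eu1.
rewrite Eu1.
have E1 : g (mul v (lt d x)) = mul (g v) (lt d u) by rewrite -Eu mulKVg.
have E2 : g (mul (one d) (lt d x)) = mul (g (one d)) (lt d u1) by rewrite mul1g -Eu1 mulKVg.
rewrite E1; congr mul; congr (lt d _).
apply: lt_inj => // i.
have := KEY _ _ _ Hx Hu E1 i; rewrite (KEY _ _ _ Hx Hu1 E2 i) => /eqP.
have PZ : P%:Z != 0 by apply/negP => /eqP [] E; move: P_gt0; rewrite E.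
by move=> H; apply/esym/(mulfI PZ)/eqP.
Qed.

End Main.

Close Scope ring_scope.

Lemma red_prefix s t : reducedb (s ++ t) -> reducedb s.
Proof.
elim: s => [|x s IH] //=; case: s IH => [|y s] IH //= /andP [-> H].
exact: IH.
Qed.

Lemma decomp d (v : FG d) s x : val v = rcons s x ->
  exists v' : FG d, [/\ val v' = s, (x.1 < d)%N & v = mul v' (lt d x)].
Proof.
case: v => w Hw /= E; move: Hw; rewrite E => Hw.
case/andP: (Hw); rewrite all_rcons => /andP [Hx As] Rw.
have Hs : wordb d s by rewrite /wordb As /=; apply: (@red_prefix s [:: x]); rewrite cats1.
exists (exist _ s Hs); split => //.
apply: val_inj => /=; rewrite val_lt // mulw_cat ?cats1 //.
Qed.

Theorem proposition5p11 (d : nat) (hd : 1 <= d) :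
  discrete_ (setI_ (Comm (Kd d)) (Comm (Gamma d))).
Proof.
move=> g Sg; exists (one d :: map (lt d) (letters d)) => h Sh Hag v.
have H1 : h (one d) = g (one d) by apply: Hag; rewrite in_cons eqxx.
have Hx x : (x.1 < d)%N -> h (lt d x) = g (lt d x).
  by move=> H; apply: Hag; rewrite in_cons map_f ?orbT // mem_letters.
move: {2}(size (val v)) (leqnn (size (val v))) => n; elim: n v => [|n IH] v.
- rewrite leqn0 size_eq0 => /eqP E.
  have -> : v = one d by apply: val_inj; rewrite E.
  exact: H1.
- case E: (val v) => [|y w].
    have -> : v = one d by apply: val_inj; rewrite E.
    by move=> _; exact: H1.
  rewrite lastI in E.
  rewrite lastI size_rcons ltnS => Hs.
  have [v' [Ev' Hx' ->]] := decomp E.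
  rewrite (ML Sh) // (ML Sg) // H1 Hx // IH //.
  by rewrite Ev'.
Qed.
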